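(* Assume $|V|\ge2$ and that there is $\kappa_0>0$ with $\overline\kappa(x,y)\ge\kappa_0$ for all $x,y\in V$, $x\ne y$. Then $\mathrm{diam}(H)\le 2/\kappa_0$.
   Context: Let $H=(V,E,w)$ be a weighted hypergraph: $V$ is a finite set, $E$ a set of nonempty subsets of $V$, $w\colon E\to\mathbb{R}_{>0}$. Write $x\sim y$ if some $e\in E$ contains both; $H$ is assumed connected. The degree is $d_x=\sum_{e\ni x}w_e>0$, $D=\mathrm{diag}(d_x)$. The distance $d(x,y)$ is the minimal $n$ with a chain $x=z_0\sim\cdots\sim z_n=y$, and $\mathrm{diam}(H)=\max_{x,y}d(x,y)$. $\delta_x$ is the indicator of $x$. $\mathbb{R}^V$ carries the inner product $\langle f,g\rangle=\sum_x f(x)g(x)/d_x$ with norm $\|\cdot\|$. For $e\in E$ let $B_e=\mathrm{Conv}\{\delta_x-\delta_y : x,y\in e\}$. The multivalued hypergraph Laplacian is $L(f)=\{\sum_{e}w_e\mathtt{b}_e(\mathtt{b}_e^\top f) : \mathtt{b}_e\in\operatorname{argmax}_{\mathtt b\in B_e}\mathtt b^\top f\}$ and the normalized Laplacian is $\mathcal{L}f=L(D^{-1}f)$, a maximal monotone operator on $(\mathbb{R}^V,\langle\cdot,\cdot\rangle)$. For $\lambda>0$ the resolvent $J_\lambda=(I+\lambda\mathcal L)^{-1}$ is a single-valued map $\mathbb{R}^V\to\mathbb{R}^V$ (equivalently $J_\lambda f=\operatorname{argmin}_g\{\frac{1}{2\lambda}\|f-g\|^2+Q(D^{-1}g)\}$,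 $Q(g)=\frac12\sum_e w_e\max_{x,y\in e}(g(x)-g(y))^2$). A function $f$ is weighted $1$-Lipschitz if $|f(x)/d_x-f(y)/d_y|\le d(x,y)$ for all $x,y$; $\mathrm{Lip}^1_w(V)$ denotes the set of such functions. $\mathrm{KD}_\lambda(x,y)=\sup\{\langle J_\lambda f,\delta_x-\delta_y\rangle : f\in\mathrm{Lip}^1_w(V)\}$. For $x\ne y$: $\kappa_\lambda(x,y)=1-\mathrm{KD}_\lambda(x,y)/d(x,y)$ and $\overline\kappa(x,y)=\limsup_{\lambda\downarrow0}\kappa_\lambda(x,y)/\lambda$. *)

(* Defs.v *)
From HB Require Import structures.
From mathcomp Require Import all_boot all_order all_algebra.
From mathcomp Require Import all_classical all_reals all_analysis.
Set Implicit Arguments. Unset Strict Implicit. Unset Printing Implicit Defensive.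
Import Order.TTheory GRing.Theory Num.Theory.
Import numFieldNormedType.Exports.
Local Open Scope classical_set_scope.
Local Open Scope ring_scope.

Section Hypergraph.
Variables (R : realType) (V : finType).
(* E : the set of hyperedges, w : the weights (only relevant on E) *)
Variables (E : {set {set V}}) (w : {set V} -> R).

Definition hadj (x y : V) : bool := [exists e in E, (x \in e) && (y \in e)].

Fixpoint hchain (n : nat) (x y : V) : bool :=
  if n is n'.+1 then [exists z, hadj x z && hchain n' z y] else x == y.

Definition hconnected : Prop := forall x y : V, exists n, hchain n x y.

(* d(x,y) : minimal length of a chain (0 if no chain exists; never used
   under connectivity) *)
Definition hdist (x y : V) : nat :=
  match boolp.pselect (exists n, hchain n x y) with
  | left h => ex_minn h
  | right _ => 0%N
  end.

Definition hdiam : nat := \max_(x : V) \max_(y : V) hdist x y.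

Definition hdeg (x : V) : R := \sum_(e in E | x \in e) w e.

Definition hdelta (x : V) : V -> R := fun z => (z == x)%:R.

Definition hinner (f g : V -> R) : R := \sum_x f x * g x / hdeg x.

Definition dotp (b f : V -> R) : R := \sum_x b x * f x.

(* b in B_e = Conv{delta_x - delta_y : x, y in e} *)
Definition inBe (e : {set V}) (b : V -> R) : Prop :=
  exists c : V -> V -> R,
    (forall x y, 0 <= c x y) /\
    \sum_(x in e) \sum_(y in e) c x y = 1 /\
    b = (fun z => \sum_(x in e) \sum_(y in e) c x y * (hdelta x z - hdelta y z)).

Definition inLap (f u : V -> R) : Prop :=
  exists b : {set V} -> (V -> R),
    (forall e, e \in E -> inBe e (b e) /\
        (forall b', inBe e b' -> dotp b' f <= dotp (b e) f)) /\
    u = (fun z => \sum_(e in E) w e * dotp (b e) f * b e z).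

Definition inNLap (f u : V -> R) : Prop :=
  inLap (fun x => f x / hdeg x) u.

Definition resolvent (lam : R) (f : V -> R) : V -> R :=
  xget (fun _ => 0) (fun g => exists u, inNLap g u /\ f = (fun z => g z + lam * u z)).

Definition wLip1 (f : V -> R) : Prop :=
  forall x y, `|f x / hdeg x - f y / hdeg y| <= (hdist x y)%:R.

Definition KD (lam : R) (x y : V) : R :=
  sup [set hinner (resolvent lam f) (fun z => hdelta x z - hdelta y z) | f in wLip1].

Definition kappa (lam : R) (x y : V) : R := 1 - KD lam x y / (hdist x y)%:R.

Definition kappa_bar (x y : V) : \bar R :=
  limf_esup (fun lam : R => ((kappa lam x y) / lam)%:E) (0%R)^'+.

End Hypergraph.

(* Main.v *)
Require Import Defs.
From HB Require Import structures.
From mathcomp Require Import all_boot all_order all_algebra.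
From mathcomp Require Import all_classical all_reals all_analysis.
From mathcomp Require Import ring lra.
Import Order.TTheory GRing.Theory Num.Theory.
Import numFieldNormedType.Exports.
Set Implicit Arguments. Unset Strict Implicit. Unset Printing Implicit Defensive.
Local Open Scope ring_scope.
Section Dist.
Variables (V : finType) (E : {set {set V}}).
Hypothesis hconn : hconnected E.

Lemma hadj_sym a b : hadj E a b = hadj E b a.
Proof.
apply/existsP/existsP => -[e /andP[eE /andP[h1 h2]]]; exists e; by rewrite eE h1 h2.
Qed.

Lemma hchain_cat n m a b c : hchain E n a b -> hchain E m b c -> hchain E (n + m) a c.
Proof.
elim: n a => [|n IH] a /=.
  by move=> /eqP -> .
move=> /existsP[z /andP[az zb]] bc; apply/existsP; exists z; rewrite az /=.
exact: IH.
Qed.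

Lemma hchain_rev n a b : hchain E n a b -> hchain E n b a.
Proof.
elim: n a => [|n IH] a /=; first by rewrite eq_sym.
move=> /existsP[z /andP[az zb]].
have := hchain_cat (IH _ zb) (_ : hchain E 1 z a).
rewrite addn1; apply.
by apply/existsP; exists a; rewrite eqxx andbT hadj_sym.
Qed.

Lemma hdist_spec a b : hchain E (hdist E a b) a b /\ forall n, hchain E n a b -> (hdist E a b <= n)%N.
Proof.
rewrite /hdist; case: boolp.pselect => [h|h]; last by exfalso; apply: h; exact: hconn.
case: ex_minnP => m hm hmin; split => //.
Qed.

Lemma hdist_chain a b : hchain E (hdist E a b) a b.
Proof. by case: (hdist_spec a b). Qed.

Lemma hdist_min a b n : hchain E n a b -> (hdist E a b <= n)%N.
Proof. by case: (hdist_spec a b) => _; apply. Qed.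

Lemma hdist_sym a b : hdist E a b = hdist E b a.
Proof.
apply/eqP; rewrite eqn_leq; apply/andP; split; apply: hdist_min; apply: hchain_rev;
  exact: hdist_chain.
Qed.

Lemma hdist_tri a b c : (hdist E a c <= hdist E a b + hdist E b c)%N.
Proof. by apply: hdist_min; apply: hchain_cat; apply: hdist_chain. Qed.

Lemma hdist_self a : hdist E a a = 0%N.
Proof. by apply/eqP; rewrite -leqn0; apply: hdist_min => /=. Qed.

Lemma hdist_edge e a b : e \in E -> a \in e -> b \in e -> (hdist E a b <= 1)%N.
Proof.
move=> eE ae be; apply: hdist_min => /=; apply/existsP; exists b; rewrite eqxx andbT.
by apply/existsP; exists e; rewrite eE ae be.
Qed.

Lemma hdist_diam a b : (hdist E a b <= hdiam E)%N.
Proof.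
rewrite /hdiam; apply: (leq_trans _ (leq_bigmax a)); exact: (leq_bigmax b).
Qed.

Lemma hdiam_attained : (0 < #|V|)%N -> exists a b, hdist E a b = hdiam E.
Proof.
move=> V0; rewrite /hdiam; have [a ->] := @bigop.eq_bigmax V (fun a => \max_(y : V) hdist E a y) V0.
have [b ->] := @bigop.eq_bigmax V (fun y => hdist E a y) V0.
by exists a, b.
Qed.
End Dist.
Section T.
Variables (R : realType) (N : nat).
Implicit Types (f g : 'rV[R]_N -> R).
Lemma contD f g : continuous f -> continuous g -> continuous (fun v => f v + g v).
Proof. move=> cf cg x; have := continuousD (cf x) (cg x); exact. Qed.
Lemma contB f g : continuous f -> continuous g -> continuous (fun v => f v - g v).
Proof. move=> cf cg x; have := continuousB (cf x) (cg x); exact. Qed.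
Lemma contM f g : continuous f -> continuous g -> continuous (fun v => f v * g v).
Proof. move=> cf cg x; have := continuousM (cf x) (cg x); exact. Qed.
Lemma contC (k : R) : continuous (fun _ : 'rV[R]_N => k).
Proof. apply: cst_continuous. Qed.
Lemma contP (i : 'I_N) : continuous (fun v : 'rV[R]_N => v ord0 i).
Proof. exact: coord_continuous. Qed.
Lemma contS (I : Type) (r : seq I) (P : pred I) (F : I -> 'rV[R]_N -> R) :
  (forall i, continuous (F i)) -> continuous (fun v => \sum_(i <- r | P i) F i v).
Proof.
move=> cF; elim: r => [|i r IH].
  have -> : (fun v => \sum_(i <- [::] | P i) F i v) = (fun _ => 0) by apply/funext => v; rewrite big_nil.
  exact: contC.
have -> : (fun v => \sum_(j <- i :: r | P j) F j v) = (fun v => if P i then F i v + \sum_(j <- r | P j) F j v else \sum_(j <- r | P j) F j v).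
  by apply/funext => v; rewrite big_cons.
case: (P i); last exact: IH.
exact: contD.
Qed.
End T.
Lemma test (R : realType) : forall x y : R, 0 < x -> x * y <= 1 -> y <= x^-1.
Proof. move=> x y hx h. Abort.
Lemma ringt (R : realType) (a b t d : R) : (a + t * b)^+2 / d = a^+2 / d + 2 * t * (a * b / d) + t^+2 * (b^+2 / d).
Proof. ring. Qed.
Section KKT.
Variable R : realType.
Lemma kkt_pos (D G2 eps : R) : 0 < eps ->
  (forall t, 0 < t -> t < eps -> t * D + t^+2 * G2 <= 0) -> D <= 0.
Proof.
move=> he H; rewrite leNgt; apply/negP => Dp.
set M := `|G2| + 1.
have M0 : 0 < M by rewrite /M ltr_pwDr // normr_ge0.
set t := Num.min (eps / 2) (D / (2 * M)).
have t0 : 0 < t by rewrite lt_min !divr_gt0 ?mulr_gt0.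
have te : t < eps.
  have : t <= eps / 2 by rewrite /t ge_min lexx.
  lra.
have tD : t * (2 * M) <= D.
  rewrite -ler_pdivlMr ?mulr_gt0 //; by rewrite /t ge_min lexx orbT.
have := H t t0 te.
have G2l : - `|G2| <= G2 by rewrite lerNl -normrN ler_norm.
have tt : 0 < t * t by rewrite mulr_gt0.
rewrite expr2 /M in tD *; nra.
Qed.

Lemma kkt_neg (D G2 eps : R) : 0 < eps ->
  (forall t, - eps < t -> t < 0 -> t * D + t^+2 * G2 <= 0) -> 0 <= D.
Proof.
move=> he H; rewrite -oppr_le0; apply: (kkt_pos (G2 := G2) he) => t t0 te.
have := H (- t); rewrite sqrrN mulNr mulrN => h; apply: h; lra.
Qed.
End KKT.
Section Lap.
Variables (R : realType) (V : finType) (E : {set {set V}}) (w : {set V} -> R).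
Hypothesis hE : forall e, e \in E -> e != finset.set0.
Hypothesis hw : forall e, e \in E -> 0 < w e.
Implicit Types (e : {set V}) (h b : V -> R) (c : V -> V -> R) (p q x y z : V).

Lemma sum_delta (F : V -> R) a : \sum_z hdelta R a z * F z = F a.
Proof.
rewrite (bigD1 a) //= /hdelta eqxx mul1r big1 ?addr0 // => z /negbTE ->; by rewrite mul0r.
Qed.

Lemma sum_delta_r (F : V -> R) a : \sum_z F z * hdelta R a z = F a.
Proof. by rewrite -(sum_delta F a); apply: eq_bigr => z _; rewrite mulrC. Qed.

Definition comb (e : {set V}) (c : V -> V -> R) : V -> R :=
  fun z => \sum_(x in e) \sum_(y in e) c x y * (hdelta R x z - hdelta R y z).

Lemma dotp_comb (e : {set V}) (c : V -> V -> R) (h : V -> R) :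
  dotp (comb e c) h = \sum_(x in e) \sum_(y in e) c x y * (h x - h y).
Proof.
rewrite /dotp /comb.
under eq_bigr do rewrite mulr_suml.
rewrite exchange_big; apply: eq_bigr => x _.
under eq_bigr do rewrite mulr_suml.
rewrite exchange_big; apply: eq_bigr => y _.
have -> : h x - h y = \sum_z (hdelta R x z - hdelta R y z) * h z.
  by under eq_bigr do rewrite mulrBl; rewrite sumrB !sum_delta.
by rewrite mulr_sumr; apply: eq_bigr => z _; rewrite mulrA.
Qed.

Lemma inBe_comb e b : inBe e b -> exists c, (forall x y, 0 <= c x y) /\
   \sum_(x in e) \sum_(y in e) c x y = 1 /\ b = comb e c.
Proof. by []. Qed.

Lemma sum1_ind (e : {set V}) (p : V) (F : V -> R) : p \in e ->
  \sum_(x in e) (x == p)%:R * F x = F p.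
Proof.
move=> pe; rewrite (bigD1 p) //= eqxx mul1r big1 ?addr0 //.
by move=> x /andP[_ /negbTE ->]; rewrite mul0r.
Qed.

Lemma sum2_ind (e : {set V}) (p q : V) (F : V -> V -> R) : p \in e -> q \in e ->
  \sum_(x in e) \sum_(y in e) ((x == p) && (y == q))%:R * F x y = F p q.
Proof.
move=> pe qe.
under eq_bigr => x _ do (under eq_bigr => y _ do rewrite -mulnb natrM -mulrA; rewrite -mulr_sumr (sum1_ind (fun y => F x y)) //).
exact: (sum1_ind (fun x => F x q)).
Qed.

Lemma inBe_pair (e : {set V}) (p q : V) : p \in e -> q \in e -> inBe e (fun z => hdelta R p z - hdelta R q z).
Proof.
move=> pe qe; exists (fun x y => ((x == p) && (y == q))%:R); split; first by move=> x y; rewrite ler0n.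
split.
  by have := sum2_ind (fun _ _ => 1) pe qe; under eq_bigr do under eq_bigr do rewrite mulr1.
apply/funext => z; by rewrite (sum2_ind (fun x y => hdelta R x z - hdelta R y z)).
Qed.

Definition optB (e : {set V}) (h b : V -> R) := inBe e b /\ (forall b', inBe e b' -> dotp b' h <= dotp b h).

Lemma optB_ge e h b p q : optB e h b -> p \in e -> q \in e -> h p - h q <= dotp b h.
Proof.
move=> [_ hmax] pe qe.
suff -> : h p - h q = dotp (fun z => hdelta R p z - hdelta R q z) h by apply: hmax; exact: inBe_pair.
by rewrite /dotp; under eq_bigr do rewrite mulrBl; rewrite sumrB !sum_delta.
Qed.

Lemma optB_ge0 e h b : e != finset.set0 -> optB e h b -> 0 <= dotp b h.
Proof.
move=> /set0Pn[p pe] ob; by have := optB_ge ob pe pe; rewrite subrr.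
Qed.

Lemma optB_comp (e : {set V}) (h b : V -> R) (c : V -> V -> R) : optB e h b -> (forall x y, 0 <= c x y) ->
  \sum_(x in e) \sum_(y in e) c x y = 1 -> b = comb e c ->
  forall x y, x \in e -> y \in e -> c x y * (h x - h y) = c x y * dotp b h.
Proof.
move=> ob c0 c1 bE.
set a := dotp b h.
have H0 : \sum_(x in e) \sum_(y in e) c x y * (a - (h x - h y)) = 0.
  have : a = \sum_(x in e) \sum_(y in e) c x y * (h x - h y) by rewrite /a bE dotp_comb.
  move=> aE.
  have -> : \sum_(x in e) \sum_(y in e) c x y * (a - (h x - h y)) =
     (\sum_(x in e) \sum_(y in e) c x y) * a - \sum_(x in e) \sum_(y in e) c x y * (h x - h y).
    rewrite mulr_suml -sumrB; apply: eq_bigr => x _; rewrite mulr_suml -sumrB.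
    by apply: eq_bigr => y _; rewrite mulrBr.
  by rewrite c1 mul1r -aE subrr.
have Hnn : forall x y, x \in e -> y \in e -> 0 <= c x y * (a - (h x - h y)).
  by move=> x y xe ye; apply: mulr_ge0; [exact: c0 | rewrite subr_ge0; exact: (optB_ge ob xe ye)].
move=> x y xe ye.
have H2 : \sum_(y in e) c x y * (a - (h x - h y)) = 0.
  apply: (psumr_eq0P _ H0) => // x' x'e; apply: sumr_ge0 => y' y'e; exact: Hnn.
have := psumr_eq0P (fun y' y'e => Hnn x y' xe y'e) H2 ye.
by rewrite mulrBr => /eqP; rewrite subr_eq0 => /eqP ->.
Qed.

Lemma comb_abs (e : {set V}) (c : V -> V -> R) z : (forall x y, 0 <= c x y) ->
  \sum_(x in e) \sum_(y in e) c x y = 1 -> `|comb e c z| <= (z \in e)%:R.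
Proof.
move=> c0 c1; rewrite /comb.
case ze: (z \in e).
  rewrite -c1; apply: (le_trans (ler_norm_sum _ _ _)); apply: ler_sum => x xe.
  apply: (le_trans (ler_norm_sum _ _ _)); apply: ler_sum => y ye.
  rewrite normrM (ger0_norm (c0 x y)) ler_piMr //.
  by rewrite /hdelta; case: (z == x); case: (z == y); rewrite /= ?subrr ?subr0 ?sub0r ?normrN ?normr1 ?normr0.
rewrite big1 ?normr0 // => x xe; rewrite big1 // => y ye.
rewrite /hdelta; have -> : (z == x) = false by apply/negbTE; apply/eqP => zx; rewrite zx xe in ze.
have -> : (z == y) = false by apply/negbTE; apply/eqP => zy; rewrite zy ye in ze.
by rewrite subrr mulr0.
Qed.

End Lap.
Section LapProps.
Variables (R : realType) (V : finType) (E : {set {set V}}) (w : {set V} -> R).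
Hypothesis hE : forall e, e \in E -> e != finset.set0.
Hypothesis hw : forall e, e \in E -> 0 < w e.
Implicit Types (e : {set V}) (h b u : V -> R) (c : V -> V -> R) (p q x y z : V).

Lemma lap_maxP h u zM : inLap E w h u -> (forall z, h z <= h zM) -> 0 <= u zM.
Proof.
move=> [b [hb ->]] hmax; apply: sumr_ge0 => e eE.
have ob : optB e h (b e) := hb e eE.
have a0 := optB_ge0 (hE eE) ob.
have [c [c0 [c1 bE]]] := ob.1.
have Hc := optB_comp ob c0 c1 bE.
rewrite -mulrA; apply: mulr_ge0; first exact: ltW (hw eE).
have [->|ap] := eqVneq (dotp (b e) h) 0; first by rewrite mul0r.
have apos : 0 < dotp (b e) h by rewrite lt_def ap a0.
apply: mulr_ge0 => //; rewrite bE /comb; apply: sumr_ge0 => x xe; apply: sumr_ge0 => y ye.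
rewrite /hdelta; case: (eqVneq zM y) => [yE|_]; last by rewrite subr0; apply: mulr_ge0.
subst y; case: (eqVneq zM x) => [<-|xM]; first by rewrite subrr mulr0.
have [->|cne] := eqVneq (c x zM) 0; first by rewrite mul0r.
have habs := mulfI cne (Hc x zM xe ye); exfalso.
have : h x - h zM <= 0 by rewrite subr_le0.
by rewrite habs leNgt apos.
Qed.

Lemma lap_minP h u zm : inLap E w h u -> (forall z, h zm <= h z) -> u zm <= 0.
Proof.
move=> [b [hb ->]] hmin; rewrite -oppr_ge0 -sumrN; apply: sumr_ge0 => e eE.
have ob : optB e h (b e) := hb e eE.
have a0 := optB_ge0 (hE eE) ob.
have [c [c0 [c1 bE]]] := ob.1.
have Hc := optB_comp ob c0 c1 bE.
rewrite -mulrA -mulrN; apply: mulr_ge0; first exact: ltW (hw eE).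
have [->|ap] := eqVneq (dotp (b e) h) 0; first by rewrite mul0r oppr0.
have apos : 0 < dotp (b e) h by rewrite lt_def ap a0.
rewrite -mulrN; apply: mulr_ge0 => //; rewrite bE /comb -sumrN; apply: sumr_ge0 => x xe.
rewrite -sumrN; apply: sumr_ge0 => y ye.
rewrite /hdelta; case: (eqVneq zm x) => [xE|_]; last first.
  by rewrite sub0r mulrN opprK; apply: mulr_ge0.
subst x; case: (eqVneq zm y) => [<-|yM]; first by rewrite subrr mulr0 oppr0.
have [->|cne] := eqVneq (c zm y) 0; first by rewrite mul0r oppr0.
have habs := mulfI cne (Hc zm y xe ye); exfalso.
have : h zm - h y <= 0 by rewrite subr_le0.
by rewrite habs leNgt apos.
Qed.

Lemma lap_ubound h u A : inLap E w h u ->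
  (forall e p q, e \in E -> p \in e -> q \in e -> h p - h q <= A) ->
  forall z, `|u z| <= A * hdeg E w z.
Proof.
move=> [b [hb ->]] hA z.
rewrite /hdeg big_mkcondr /= mulr_sumr.
apply: (le_trans (ler_norm_sum _ _ _)); apply: ler_sum => e eE.
have ob : optB e h (b e) := hb e eE.
have a0 := optB_ge0 (hE eE) ob.
have [c [c0 [c1 bE]]] := ob.1.
have aA : dotp (b e) h <= A.
  rewrite bE dotp_comb -[A]mul1r -c1 mulr_suml; apply: ler_sum => x xe.
  rewrite mulr_suml; apply: ler_sum => y ye; apply: ler_wpM2l; first exact: c0.
  exact: (hA e x y eE xe ye).
have bz : `|b e z| <= (z \in e)%:R by rewrite bE; exact: comb_abs.
rewrite normrM normrM (ger0_norm a0) (gtr0_norm (hw eE)).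
case ze: (z \in e); last first.
  by move: bz; rewrite ze normr_le0 => /eqP ->; rewrite normr0 !mulr0.
rewrite [A * _]mulrC -mulrA; apply: ler_wpM2l; first exact: ltW (hw eE).
rewrite ze /= in bz; rewrite -[A]mulr1; exact: ler_pM.
Qed.

End LapProps.
Section Exist.
Variables (R : realType) (V : finType) (E : {set {set V}}) (w : {set V} -> R).
Hypothesis hE : forall e, e \in E -> e != finset.set0.
Hypothesis hw : forall e, e \in E -> 0 < w e.
Hypothesis hd : forall x, 0 < hdeg E w x.
Variables (lam : R) (p : V -> R).
Hypothesis hlam : 0 < lam.

Local Notation d := (hdeg E w).
Local Notation T := ({set V} * V * V)%type.
Implicit Types (c k : T -> R) (e : {set V}) (x y z a b : V).

Definition Sc c e := \sum_(x in e) \sum_(y in e) c (e, x, y).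
Definition qc c e := comb e (fun x y => c (e, x, y)).
Definition Uc c z := \sum_(e in E) w e * qc c e z.
Definition hc c z := p z - lam * Uc c z / d z.
Definition T1 c := \sum_(e in E) w e * dotp (qc c e) p.
Definition Q2 c := \sum_z (Uc c z)^+2 / d z.
Definition S2 c := \sum_(e in E) w e * (Sc c e)^+2.
Definition Gc c := T1 c - lam / 2 * Q2 c - 1 / 2 * S2 c.
Definition Xc c k := \sum_z Uc c z * Uc k z / d z.
Definition Yc c k := \sum_(e in E) w e * Sc c e * Sc k e.
Definition ctk c k t : T -> R := fun i => c i + t * k i.

Lemma Sc_lin c k t e : Sc (ctk c k t) e = Sc c e + t * Sc k e.
Proof.
rewrite /Sc mulr_sumr -big_split; apply: eq_bigr => x _.
by rewrite mulr_sumr -big_split.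
Qed.

Lemma qc_lin c k t e z : qc (ctk c k t) e z = qc c e z + t * qc k e z.
Proof.
rewrite /qc /comb mulr_sumr -big_split; apply: eq_bigr => x _.
rewrite mulr_sumr -big_split; apply: eq_bigr => y _ /=.
by rewrite /ctk mulrDl mulrA.
Qed.

Lemma Uc_lin c k t z : Uc (ctk c k t) z = Uc c z + t * Uc k z.
Proof.
rewrite /Uc mulr_sumr -big_split; apply: eq_bigr => e _.
by rewrite qc_lin mulrDr mulrCA.
Qed.

Lemma dotp_lin c k t e : dotp (qc (ctk c k t) e) p = dotp (qc c e) p + t * dotp (qc k e) p.
Proof.
rewrite /dotp mulr_sumr -big_split; apply: eq_bigr => z _ /=; rewrite qc_lin; ring.
Qed.

Lemma T1_lin c k t : T1 (ctk c k t) = T1 c + t * T1 k.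
Proof.
rewrite /T1 mulr_sumr -big_split; apply: eq_bigr => e _.
rewrite /= dotp_lin; ring.
Qed.

Lemma Q2_lin c k t : Q2 (ctk c k t) = Q2 c + 2 * t * Xc c k + t^+2 * Q2 k.
Proof.
rewrite /Q2 /Xc !mulr_sumr -!big_split; apply: eq_bigr => z _.
rewrite /= Uc_lin; ring.
Qed.

Lemma S2_lin c k t : S2 (ctk c k t) = S2 c + 2 * t * Yc c k + t^+2 * S2 k.
Proof.
rewrite /S2 /Yc !mulr_sumr -!big_split; apply: eq_bigr => e _.
rewrite /= Sc_lin; ring.
Qed.

Lemma Gc_lin c k t : Gc (ctk c k t) =
  Gc c + t * (T1 k - lam * Xc c k - Yc c k) + t^+2 * (- (lam / 2 * Q2 k + 1 / 2 * S2 k)).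
Proof. rewrite /Gc T1_lin Q2_lin S2_lin; by field. Qed.

Lemma sum1_gen (I : finType) (A : {set I}) (q : I) (F : I -> R) : q \in A ->
  \sum_(x in A) (x == q)%:R * F x = F q.
Proof.
move=> qA; rewrite (bigD1 q) //= eqxx mul1r big1 ?addr0 //.
by move=> x /andP[_ /negbTE ->]; rewrite mul0r.
Qed.

Section K0.
Variables (e0 : {set V}) (a b : V).
Hypotheses (e0E : e0 \in E) (ae : a \in e0) (be : b \in e0).
Definition k0 : T -> R := fun i => (i == (e0, a, b))%:R.

Lemma sum_k0 e (F : V -> V -> R) :
  \sum_(x in e) \sum_(y in e) k0 (e, x, y) * F x y = (e == e0)%:R * F a b.
Proof.
case: (eqVneq e e0) => [->|ne].
  rewrite mul1r -(sum2_ind F ae be); apply: eq_bigr => x _; apply: eq_bigr => y _.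
  by rewrite /k0 !xpair_eqE eqxx.
rewrite big1 ?mul0r // => x _; rewrite big1 // => y _.
by rewrite /k0 !xpair_eqE (negbTE ne) mul0r.
Qed.

Lemma Sc_k0 e : Sc k0 e = (e == e0)%:R.
Proof.
have := sum_k0 e (fun _ _ => 1); rewrite mulr1 => <-.
by apply: eq_bigr => x _; apply: eq_bigr => y _; rewrite mulr1.
Qed.

Lemma qc_k0 e z : qc k0 e z = (e == e0)%:R * (hdelta R a z - hdelta R b z).
Proof. exact: (sum_k0 e (fun x y => hdelta R x z - hdelta R y z)). Qed.

Lemma Uc_k0 z : Uc k0 z = w e0 * (hdelta R a z - hdelta R b z).
Proof.
rewrite /Uc -(sum1_gen (fun e => w e * (hdelta R a z - hdelta R b z)) e0E).
by apply: eq_bigr => e _; rewrite qc_k0 mulrCA.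
Qed.

Lemma T1_k0 : T1 k0 = w e0 * (p a - p b).
Proof.
rewrite /T1 -(sum1_gen (fun e => w e * (p a - p b)) e0E).
apply: eq_bigr => e _; rewrite /qc dotp_comb (sum_k0 e (fun x y => p x - p y)).
by rewrite mulrCA.
Qed.

Lemma Xc_k0 c : Xc c k0 = w e0 * (Uc c a / d a - Uc c b / d b).
Proof.
rewrite /Xc -(sum_delta_r (fun z => Uc c z / d z) a) -(sum_delta_r (fun z => Uc c z / d z) b).
rewrite -sumrB mulr_sumr; apply: eq_bigr => z _; rewrite Uc_k0; ring.
Qed.

Lemma Yc_k0 c : Yc c k0 = w e0 * Sc c e0.
Proof.
rewrite /Yc -(sum1_gen (fun e => w e * Sc c e) e0E).
by apply: eq_bigr => e _; rewrite Sc_k0 mulrC.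
Qed.

Lemma deriv_k0 c : T1 k0 - lam * Xc c k0 - Yc c k0 = w e0 * (hc c a - hc c b - Sc c e0).
Proof. rewrite T1_k0 Xc_k0 Yc_k0 /hc; ring. Qed.
End K0.
Definition Pn := \sum_z `|p z|.
Definition Wt := \sum_(e in E) w e.
Definition Be e := 4 * Pn + 4 * Pn^+2 * Wt / w e + 2.
Definition Bd (i : T) : R :=
  if (i.1.1 \in E) && (i.1.2 \in i.1.1) && (i.2 \in i.1.1) then Be i.1.1 else 0.
Definition feas c := forall i, 0 <= c i <= Bd i.

Lemma Pn_ge0 : 0 <= Pn. Proof. by apply: sumr_ge0 => z _; exact: normr_ge0. Qed.
Lemma Wt_ge0 : 0 <= Wt. Proof. by apply: sumr_ge0 => e eE; exact: ltW (hw eE). Qed.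
Lemma pa_le z : `|p z| <= Pn.
Proof.
rewrite /Pn (bigD1 z) //= lerDl; apply: sumr_ge0 => y _; exact: normr_ge0.
Qed.

Lemma Bd_ge0 i : 0 <= Bd i.
Proof.
rewrite /Bd; case: ifP => // /andP[/andP[eE _] _].
have := Pn_ge0; have := Wt_ge0; have := hw eE => w0 W0 P0.
rewrite /Be; apply: addr_ge0; last by [].
apply: addr_ge0; first by apply: mulr_ge0.
apply: divr_ge0; last exact: ltW.
by apply: mulr_ge0 => //; apply: mulr_ge0 => //; apply: mulr_ge0.
Qed.

Lemma Sc_ge0 c e : (forall i, 0 <= c i) -> 0 <= Sc c e.
Proof. by move=> c0; apply: sumr_ge0 => x _; apply: sumr_ge0 => y _. Qed.

Lemma Gc0 : Gc (fun _ => 0) = 0.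
Proof.
have qc0 e z : qc (fun _ => 0) e z = 0.
  by rewrite /qc /comb big1 // => x _; rewrite big1 // => y _; rewrite mul0r.
have Uc0 z : Uc (fun _ => 0) z = 0.
  by rewrite /Uc big1 // => e _; rewrite qc0 mulr0.
have Sc0 e : Sc (fun _ => 0) e = 0.
  by rewrite /Sc big1 // => x _; rewrite big1.
rewrite /Gc /T1 /Q2 /S2 big1; last first.
  by move=> e _; rewrite /dotp big1 ?mulr0 // => z _; rewrite qc0 mul0r.
rewrite big1; last by move=> z _; rewrite Uc0 expr2 !mul0r.
rewrite big1; last by move=> e _; rewrite Sc0 expr2 mul0r mulr0.
by rewrite !mulr0 !subr0.
Qed.

Lemma coerc c : (forall i, 0 <= c i) -> 0 <= Gc c ->
  forall e0, e0 \in E -> Sc c e0 <= Be e0 - 1.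
Proof.
move=> c0 G0 e0 e0E.
have P0 := Pn_ge0.
set psi := fun s : R => 2 * Pn * s - s^+2 / 2.
have H1 : Gc c <= \sum_(e in E) w e * psi (Sc c e).
  have Q0 : 0 <= Q2 c.
    by apply: sumr_ge0 => z _; apply: divr_ge0; [exact: sqr_ge0 | exact: ltW].
  have T1le : T1 c <= \sum_(e in E) w e * (2 * Pn * Sc c e).
    apply: ler_sum => e eE; apply: ler_wpM2l; first exact: ltW (hw eE).
    rewrite /qc dotp_comb /Sc mulr_sumr; apply: ler_sum => x _.
    rewrite mulr_sumr; apply: ler_sum => y _; rewrite mulrC; apply: ler_wpM2r; first exact: c0.
    have := pa_le x; have := pa_le y; have := ler_norm (p x); have := ler_norm (- p y).
    rewrite normrN; lra.
  have -> : \sum_(e in E) w e * psi (Sc c e) =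
     \sum_(e in E) w e * (2 * Pn * Sc c e) - 1 / 2 * S2 c.
    rewrite /S2 [X in _ - X]mulr_sumr -sumrB; apply: eq_bigr => e _; rewrite /psi; by field.
  rewrite /Gc; have : 0 <= lam / 2 * Q2 c by apply: mulr_ge0 => //; apply: divr_ge0 => //; exact: ltW.
  lra.
have psile s : psi s <= 2 * Pn^+2.
  rewrite /psi; have := sqr_ge0 (s - 2 * Pn); rewrite !expr2; lra.
have H2 : \sum_(e in E) w e * psi (Sc c e) <= w e0 * psi (Sc c e0) + 2 * Pn^+2 * Wt.
  rewrite (bigD1 e0) //= lerD2l /Wt [X in _ <= _ * X](bigD1 e0) //= mulrDr.
  apply: (@le_trans _ _ (2 * Pn^+2 * (\sum_(i in E | i != e0) w i))).
    rewrite mulr_sumr; apply: ler_sum => e /andP[eE _]; rewrite mulrC.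
    by apply: ler_wpM2r => //; exact: ltW (hw eE).
  rewrite lerDr; apply: mulr_ge0; last exact: ltW (hw e0E).
  by apply: mulr_ge0 => //; apply: sqr_ge0.
have w0 := hw e0E.
set K := 2 * Pn^+2 * Wt / w e0.
have K0 : 0 <= K.
  apply: divr_ge0; last exact: ltW.
  by apply: mulr_ge0; [apply: mulr_ge0 => //; exact: sqr_ge0 | exact: Wt_ge0].
have H3 : - psi (Sc c e0) <= K.
  rewrite /K ler_pdivlMr // mulNr mulrC; move: (le_trans G0 (le_trans H1 H2)); lra.
have -> : Be e0 - 1 = 4 * Pn + 2 * K + 1 by rewrite /Be /K; field; rewrite gt_eqF.
rewrite leNgt; apply/negP => hS.
move: H3; rewrite /psi expr2; nra.
Qed.
Local Notation N := #|{: T}|.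
Definition cf (v : 'rV[R]_N) : T -> R := fun i => v ord0 (enum_rank i).
Definition vecc c : 'rV[R]_N := \row_j c (enum_val j).
Lemma cf_vecc c : cf (vecc c) = c.
Proof. by apply/funext => i; rewrite /cf /vecc mxE enum_rankK. Qed.

Lemma cont_cf i : continuous (fun v : 'rV[R]_N => cf v i).
Proof. exact: coord_continuous. Qed.

Lemma cont_qc e z : continuous (fun v => qc (cf v) e z).
Proof.
apply: contS => x; apply: contS => y; apply: contM; [exact: cont_cf | exact: contC].
Qed.

Lemma cont_Uc z : continuous (fun v => Uc (cf v) z).
Proof. apply: contS => e; apply: contM; [exact: contC | exact: cont_qc]. Qed.

Lemma cont_Sc e : continuous (fun v => Sc (cf v) e).
Proof. apply: contS => x; apply: contS => y; exact: cont_cf. Qed.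

Lemma cont_Gc : continuous (fun v => Gc (cf v)).
Proof.
apply: contB; first apply: contB.
- apply: contS => e; apply: contM; first exact: contC.
  apply: contS => z; apply: contM; [exact: cont_qc | exact: contC].
- apply: contM; first exact: contC.
  apply: contS => z; apply: contM; last exact: contC.
  have -> : (fun v => Uc (cf v) z ^+ 2) = (fun v => Uc (cf v) z * Uc (cf v) z).
    by apply/funext => v; rewrite expr2.
  by apply: contM; exact: cont_Uc.
- apply: contM; first exact: contC.
  apply: contS => e; apply: contM; first exact: contC.
  have -> : (fun v => Sc (cf v) e ^+ 2) = (fun v => Sc (cf v) e * Sc (cf v) e).
    by apply/funext => v; rewrite expr2.
  by apply: contM; exact: cont_Sc.
Qed.

Local Open Scope classical_set_scope.
Definition Box := [set v : 'rV[R]_N | forall j, `[0, Bd (enum_val j)]%classic (v ord0 j)].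

Lemma Box_feas v : Box v <-> feas (cf v).
Proof.
split => [hv i | hf j].
  by have := hv (enum_rank i); rewrite /= in_itv /= enum_rankK.
by have := hf (enum_val j); rewrite /= in_itv /cf /= enum_valK.
Qed.

Lemma exists_max : exists c, feas c /\ forall c', feas c' -> Gc c' <= Gc c.
Proof.
have B0 : Box !=set0.
  exists (vecc (fun _ => 0)); apply/Box_feas; rewrite cf_vecc => i.
  by rewrite lexx Bd_ge0.
have cB : compact Box.
  apply: (@rV_compact _ _ (fun j => `[0, Bd (enum_val j)]%classic)) => j.
  exact: segment_compact.
have cG : {within Box, continuous (fun v => Gc (cf v))}.
  apply: continuous_subspaceT; exact: cont_Gc.
have [v vB vmax] := EVT_max_rV B0 cB cG.
exists (cf v); split; first by apply/Box_feas; rewrite inE in vB.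
move=> c' fc'; rewrite -(cf_vecc c'); apply: vmax; rewrite inE; apply/Box_feas.
by rewrite cf_vecc.
Qed.
Lemma single_le c e0 a b : (forall i, 0 <= c i) -> a \in e0 -> b \in e0 -> c (e0, a, b) <= Sc c e0.
Proof.
move=> c0 ae be; rewrite /Sc (bigD1 a) //= (bigD1 b) //= -addrA lerDl.
apply: addr_ge0; first by apply: sumr_ge0 => y _.
by apply: sumr_ge0 => x _; apply: sumr_ge0 => y _.
Qed.

Lemma feas_pert c e0 a b t : feas c -> 0 <= c (e0, a, b) + t <= Bd (e0, a, b) ->
  feas (ctk c (k0 e0 a b) t).
Proof.
move=> fc h i; rewrite /ctk /k0; case: (eqVneq i (e0, a, b)) => [->|ne].
  by rewrite mulr1.
by rewrite mulr0 addr0; exact: fc.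
Qed.

Lemma sol_exists : exists h u, inLap E w h u /\ forall z, p z = h z + lam * u z / d z.
Proof.
have [c [fc cmax]] := exists_max.
have c0 i : 0 <= c i by have /andP[] := fc i.
have G0 : 0 <= Gc c.
  rewrite -Gc0; apply: cmax => i; by rewrite lexx Bd_ge0.
have SB := coerc c0 G0.
set h := hc c.
have Bde e0 a b : e0 \in E -> a \in e0 -> b \in e0 -> Bd (e0, a, b) = Be e0.
  by move=> e0E ae be; rewrite /Bd /= e0E ae be.
have K1 e0 a b : e0 \in E -> a \in e0 -> b \in e0 -> h a - h b <= Sc c e0.
  move=> e0E ae be.
  have : T1 (k0 e0 a b) - lam * Xc c (k0 e0 a b) - Yc c (k0 e0 a b) <= 0.
    apply: (@kkt_pos _ _ (- (lam / 2 * Q2 (k0 e0 a b) + 1 / 2 * S2 (k0 e0 a b))) 1) => // t t0 t1.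
    have F : feas (ctk c (k0 e0 a b) t).
      apply: feas_pert => //; rewrite Bde //.
      have := single_le c0 ae be; have := SB e0 e0E; have := c0 (e0, a, b); lra.
    have := cmax _ F; rewrite Gc_lin; lra.
  rewrite (deriv_k0 e0E ae be) pmulr_rle0 ?hw //; rewrite /h; lra.
have K2 e0 a b : e0 \in E -> a \in e0 -> b \in e0 ->
    c (e0, a, b) * (h a - h b) = c (e0, a, b) * Sc c e0.
  move=> e0E ae be.
  have [->|cne] := eqVneq (c (e0, a, b)) 0; first by rewrite !mul0r.
  have cpos : 0 < c (e0, a, b) by rewrite lt_def cne c0.
  congr (_ * _); apply/eqP; rewrite eq_le K1 //=.
  have : 0 <= T1 (k0 e0 a b) - lam * Xc c (k0 e0 a b) - Yc c (k0 e0 a b).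
    apply: (@kkt_neg _ _ (- (lam / 2 * Q2 (k0 e0 a b) + 1 / 2 * S2 (k0 e0 a b))) (c (e0, a, b))) => // t t0 t1.
    have F : feas (ctk c (k0 e0 a b) t).
      apply: feas_pert => //; rewrite Bde //.
      have := single_le c0 ae be; have := SB e0 e0E; lra.
    have := cmax _ F; rewrite Gc_lin; lra.
  rewrite (deriv_k0 e0E ae be) pmulr_rge0 ?hw //; rewrite /h; lra.
have Kup e : e \in E -> forall bb, inBe e bb -> dotp bb h <= Sc c e.
  move=> eE bb [c' [c0' [c1' ->]]]; rewrite dotp_comb -[Sc c e]mul1r -c1' mulr_suml.
  apply: ler_sum => x xe; rewrite mulr_suml; apply: ler_sum => y ye.
  by apply: ler_wpM2l; [exact: c0' | exact: K1].
pose bf e := if 0 < Sc c e then (fun z => qc c e z / Sc c e) else (fun _ : V => 0 : R).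
have Hdot e : e \in E -> optB e h (bf e) /\ dotp (bf e) h = Sc c e.
  move=> eE; rewrite /bf; case: ifP => Spos.
    set c' := fun x y => c (e, x, y) / Sc c e.
    have bE : (fun z => qc c e z / Sc c e) = comb e c'.
      apply/funext => z; rewrite /qc /comb mulr_suml; apply: eq_bigr => x _.
      by rewrite mulr_suml; apply: eq_bigr => y _; rewrite /c' mulrAC.
    have c1' : \sum_(x in e) \sum_(y in e) c' x y = 1.
      under eq_bigr do rewrite -mulr_suml.
      by rewrite -mulr_suml divff // gt_eqF.
    have c0' x y : 0 <= c' x y by apply: divr_ge0; [exact: c0 | exact: ltW].
    have dE : dotp (comb e c') h = Sc c e.
      rewrite dotp_comb.
      transitivity (\sum_(x in e) \sum_(y in e) c' x y * Sc c e).
        apply: eq_bigr => x xe; apply: eq_bigr => y ye.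
        by rewrite /c' mulrAC K2 // mulrAC.
      by under eq_bigr do rewrite -mulr_suml; rewrite -mulr_suml c1' mul1r.
    rewrite bE dE; split => //; split; first by exists c'.
    by move=> bb hbb; rewrite dE; exact: Kup.
  have S0 : Sc c e = 0.
    by apply/eqP; rewrite eq_le leNgt Spos Sc_ge0.
  have ib : inBe e (fun _ : V => 0 : R).
    have /set0Pn[a0 a0e] := hE eE.
    have E0 : (fun z : V => hdelta R a0 z - hdelta R a0 z) = (fun _ => 0).
      by apply/funext => z; rewrite subrr.
    by have := inBe_pair R a0e a0e; rewrite E0.
  have d0 : dotp (fun _ : V => 0) h = 0 by rewrite /dotp big1 // => z _; rewrite mul0r.
  rewrite d0 S0; split => //; split => // bb hbb; rewrite d0 -S0; exact: Kup.
have Hq e z : e \in E -> Sc c e * bf e z = qc c e z.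
  move=> eE; rewrite /bf; case: ifP => Spos; first by rewrite mulrC divfK // gt_eqF.
  have S0 : Sc c e = 0 by apply/eqP; rewrite eq_le leNgt Spos Sc_ge0.
  rewrite mulr0 /qc /comb big1 // => x xe; rewrite big1 // => y ye.
  have H1 := psumr_eq0P (fun x _ => sumr_ge0 _ (fun y _ => c0 (e, x, y))) S0 xe.
  by rewrite (psumr_eq0P (fun y _ => c0 (e, x, y)) H1 ye) mul0r.
exists h, (Uc c); split.
  exists bf; split; first by move=> e eE; exact: (Hdot e eE).1.
  apply/funext => z; rewrite /Uc; apply: eq_bigr => e eE.
  by rewrite (Hdot e eE).2 -mulrA Hq.
move=> z; rewrite /h /hc; field; exact: lt0r_neq0.
Qed.
End Exist.
Lemma exists_argmax (V : finType) (R : realType) (z0 : V) (h : V -> R) :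
  exists zM, forall z, h z <= h zM.
Proof.
by case: (@arg_maxP _ R V z0 xpredT h isT) => zM _ H; exists zM => z; exact: H.
Qed.

Lemma exists_argmin (V : finType) (R : realType) (z0 : V) (h : V -> R) :
  exists zm, forall z, h zm <= h z.
Proof.
have [zm H] := exists_argmax z0 (fun z => - h z); exists zm => z.
by have := H z; rewrite lerN2.
Qed.

Section Main.
Variables (R : realType) (V : finType) (E : {set {set V}}) (w : {set V} -> R).
Hypothesis hE : forall e, e \in E -> e != finset.set0.
Hypothesis hw : forall e, e \in E -> 0 < w e.
Hypothesis hconn : hconnected E.
Hypothesis hd : forall x, 0 < hdeg E w x.
Local Notation d := (hdeg E w).

Lemma resolvent_spec lam f : 0 < lam ->
  exists u, inNLap E w (resolvent E w lam f) u /\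
    f = (fun z => resolvent E w lam f z + lam * u z).
Proof.
move=> hlam.
pose P := (fun g : V -> R => exists u, inNLap E w g u /\ f = (fun z => g z + lam * u z)).
suff Hex : exists g, P g by exact: (@xgetPex _ (fun _ : V => 0 : R) P Hex).
have [h [u [hu hp]]] := sol_exists hE hw hd (fun z => f z / d z) hlam.
exists (fun z => h z * d z), u; split.
  rewrite /inNLap; have -> : (fun x => h x * d x / d x) = h.
    by apply/funext => x; rewrite mulfK // lt0r_neq0.
  exact: hu.
apply/funext => z; have := hp z => /(congr1 (fun t => t * d z)).
rewrite divfK ?lt0r_neq0 // => ->; rewrite mulrDl divfK ?lt0r_neq0 //.
Qed.

Lemma hinner_delta g x y :
  hinner E w g (fun z => hdelta R x z - hdelta R y z) = g x / d x - g y / d y.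
Proof.
rewrite /hinner -(sum_delta_r (fun z => g z / d z) x) -(sum_delta_r (fun z => g z / d z) y).
rewrite -sumrB; apply: eq_bigr => z _; rewrite mulrBr mulrBl; ring.
Qed.

Lemma res_max (z0 : V) lam f : 0 < lam ->
  let h := fun z => resolvent E w lam f z / d z in
  exists zM zm, (forall z, h z <= h zM) /\ (forall z, h zm <= h z) /\
    h zM <= f zM / d zM /\ f zm / d zm <= h zm.
Proof.
move=> hlam h.
have [u [hu fE]] := resolvent_spec f hlam.
have [zM HM] := exists_argmax z0 h; have [zm Hm] := exists_argmin z0 h.
exists zM, zm; split => //; split => //.
have u1 := lap_maxP hE hw hu HM; have u2 := lap_minP hE hw hu Hm.
have fz z : f z / d z = h z + lam * u z / d z.
  by rewrite {1}fE /h mulrDl.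
rewrite !fz; split.
  by rewrite lerDl; apply: divr_ge0; [apply: mulr_ge0 => //; exact: ltW | exact: ltW].
rewrite gerDl; apply: mulr_le0_ge0; [apply: mulr_ge0_le0 => //; exact: ltW | ].
by rewrite invr_ge0; exact: ltW.
Qed.

Lemma hd_lip p q y : (hdist E p y)%:R - (hdist E q y)%:R <= (hdist E p q)%:R :> R.
Proof.
have := hdist_tri hconn p q y; rewrite -(ler_nat R) natrD; lra.
Qed.

Lemma KD_ub (z0 : V) lam x y f : 0 < lam -> wLip1 E w f ->
  hinner E w (resolvent E w lam f) (fun z => hdelta R x z - hdelta R y z) <= (hdiam E)%:R.
Proof.
move=> hlam hf; rewrite hinner_delta.
have [zM [zm [HM [Hm [h1 h2]]]]] := res_max z0 f hlam.
have := HM x; have := Hm y; have := hf zM zm; have := hdist_diam E zM zm.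
rewrite -(ler_nat R) => hD /= hl hx hy.
have := ler_norm (f zM / d zM - f zm / d zm); lra.
Qed.

Lemma KD_lb (x y : V) lam : 0 < lam -> hdist E x y = hdiam E ->
  (hdiam E)%:R - 2 * lam * (1 + 2 * lam * (hdiam E)%:R) <= KD E w lam x y.
Proof.
move=> hlam hxy; set D0 : R := (hdiam E)%:R.
pose f0 := fun z => (hdist E z y)%:R * d z.
have f0E z : f0 z / d z = (hdist E z y)%:R by rewrite /f0 mulfK ?lt0r_neq0.
have hf0 : wLip1 E w f0.
  move=> a b; rewrite !f0E ler_norml; have := hd_lip a b y; have := hd_lip b a y.
  rewrite (hdist_sym hconn b a); lra.
have [u [hu fE]] := resolvent_spec f0 hlam.
set g := resolvent E w lam f0 in hu fE *.
pose h := fun z => g z / d z.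
have hu' : inLap E w h u := hu.
have rel z : (hdist E z y)%:R = h z + lam * u z / d z.
  rewrite -f0E {1}fE /h mulrDl //.
have [zM [zm [HM [Hm [h1 h2]]]]] := res_max x f0 hlam.
rewrite -/g !f0E in HM Hm h1 h2.
have hhi z : h z <= D0.
  apply: (le_trans (HM z)); apply: (le_trans h1); rewrite ler_nat; exact: hdist_diam.
have hlo z : 0 <= h z.
  apply: le_trans (Hm z); apply: le_trans h2; exact: ler0n.
have ub1 := lap_ubound hE hw hu' (A := D0).
have dev A z : (forall z, `|u z| <= A * d z) -> `|lam * u z / d z| <= lam * A.
  move=> hA; rewrite -mulrA normrM (gtr0_norm hlam) ler_pM2l // normrM normfV.
  by rewrite (gtr0_norm (hd z)) ler_pdivrMr //; exact: hA.
have dev1 z : `|lam * u z / d z| <= lam * D0.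
  apply: dev => z'; apply: ub1 => e p q _ _ _; have := hhi p; have := hlo q; lra.
set A' := 1 + 2 * lam * D0.
have dev2 z : `|lam * u z / d z| <= lam * A'.
  apply: dev => z'; apply: (lap_ubound hE hw hu') => e p q eE pe qe.
  have := hdist_edge hconn eE pe qe; rewrite -(ler_nat R) => he.
  have := hd_lip p q y; rewrite (rel p) (rel q).
  have := dev1 p; have := dev1 q.
  have := ler_norm (- (lam * u p / d p)); have := ler_norm (lam * u q / d q); rewrite normrN.
  move: he; rewrite mulr1n => he.
  rewrite /A'; lra.
have hub : has_ubound [set hinner E w (resolvent E w lam f) (fun z => hdelta R x z - hdelta R y z) | f in wLip1 E w]%classic.
  by exists D0 => _ [f hf <-]; exact: (KD_ub x).
have := ub_le_sup hub; rewrite /ubound /= => H.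
apply: le_trans (H _ _); last by exists f0.
rewrite hinner_delta -/g.
have := rel x; have := rel y; rewrite hxy (hdist_self hconn) mulr0n /h => ry rx.
have := dev2 x; have := dev2 y.
have := ler_norm (lam * u x / d x); have := ler_norm (- (lam * u y / d y)); rewrite normrN.
rewrite -/D0 in rx; lra.
Qed.
End Main.
Section Final.
Local Open Scope classical_set_scope.
Variables (R : realType) (V : finType) (E : {set {set V}}) (w : {set V} -> R).

Lemma kbar_le (x y : V) (M delta : R) : 0 < delta ->
  (forall lam, 0 < lam -> lam < delta -> kappa E w lam x y / lam <= M) ->
  (kappa_bar E w x y <= M%:E)%E.
Proof.
move=> hd Hk.
have HV : \forall t \near (0:R)^'+, 0 < t < delta.
  near=> t; apply/andP; split; near: t; [exact: nbhs_right_gt | exact: nbhs_right_lt].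
rewrite /kappa_bar /limf_esup.
apply: (@le_trans _ _ (ereal_sup ((fun lam : R => ((kappa E w lam x y) / lam)%:E) @` [set t | 0 < t < delta]))).
  apply: ereal_inf_lbound; by exists [set t | 0 < t < delta].
apply: ge_ereal_sup => _ [t /andP[t0 t1] <-]; rewrite lee_fin; exact: Hk.
Unshelve. all: by end_near.
Qed.
End Final.

Unset Implicit Arguments.

Theorem mainTheorem16 (R : realType) (V : finType)
  (E : {set {set V}}) (w : {set V} -> R)
  (hE : forall e, e \in E -> e != finset.set0)
  (hw : forall e, e \in E -> 0 < w e)
  (hconn : hconnected E)
  (hdeg_pos : forall x : V, 0 < hdeg E w x)
  (hV : (2 <= #|V|)%N)
  (kappa0 : R) (hk0 : 0 < kappa0)
  (hcurv : forall x y : V, x != y -> (kappa0%:E <= kappa_bar E w x y)%E) :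
  (hdiam E)%:R <= 2 / kappa0.
Proof.
have V0 : (0 < #|V|)%N by apply: leq_trans hV.
have [x [y hxy]] := hdiam_attained E V0.
have [D00|D0pos] := posnP (hdiam E).
  by rewrite D00 divr_ge0 // ltW.
have xy : x != y.
  apply/eqP => exy; move: hxy; rewrite exy (hdist_self hconn) => h0.
  by rewrite -h0 ltnn in D0pos.
have hk := hcurv x y xy.
set D0 : R := (hdiam E)%:R.
have D0p : 0 < D0 by rewrite /D0 ltr0n.
have bound delta : 0 < delta -> kappa0 * D0 <= 2 + 4 * delta * D0.
  move=> hdl.
  have Hk lam : 0 < lam -> lam < delta -> kappa E w lam x y / lam <= (2 + 4 * delta * D0) / D0.
    move=> hl hld.
    have HKD := KD_lb hE hw hconn hdeg_pos hl hxy.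
    rewrite /kappa hxy -/D0 in HKD *.
    rewrite ler_pdivrMr //.
    rewrite -(ler_pM2r D0p).
    have -> : (1 - KD E w lam x y / D0) * D0 = D0 - KD E w lam x y by field; exact: (lt0r_neq0 D0p).
    have -> : (2 + 4 * delta * D0) / D0 * lam * D0 = (2 + 4 * delta * D0) * lam.
      by field; exact: (lt0r_neq0 D0p).
    have : lam * lam * D0 <= lam * delta * D0.
      by rewrite ler_pM2r // ler_pM2l // ltW.
    rewrite -/D0 in HKD; nra.
  have := le_trans hk (kbar_le hdl Hk); rewrite lee_fin ler_pdivlMr //.
rewrite ler_pdivlMr // leNgt; apply/negP => H.
pose delta := (D0 * kappa0 - 2) / (8 * D0).
have hdl : 0 < delta by rewrite /delta divr_gt0 ?mulr_gt0 // subr_gt0.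
have := bound delta hdl.
have -> : 4 * delta * D0 = (D0 * kappa0 - 2) / 2 by rewrite /delta; field; exact: (lt0r_neq0 D0p).
lra.
Qed.
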